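(* Let $Y$ be a fixed point combinator, $f$ a variable, and $B'_Y \equiv Y(\lambda x.\, f x (f x (Y(\lambda y.\, f x y))))$. Then for every $n\ge0$, if the subtree of $\mathrm{BT}^c(B'_Y)$ at position $(12)^n2$ carries an annotation, that annotation is $0$.
   Context: Untyped $\lambda$-calculus modulo $\alpha$. A fixed point combinator is a term $Y$ with $Yz=_\beta z(Yz)$ for a variable $z$ not free in $Y$. Head reduction step: $\lambda x_1\ldots x_n.(\lambda y.P)QQ_1\ldots Q_m \to \lambda x_1\ldots x_n.P[y:=Q]Q_1\ldots Q_m$; hnf: $\lambda x_1\ldots x_n.\,yQ_1\ldots Q_m$. The clocked Böhm tree $\mathrm{BT}^c(M)$ is defined coinductively: $\bot$ if $M$ has no hnf; otherwise, if $M\to_h^k \lambda x_1\ldots x_n.\,yM_1\ldots M_m$ is the head reduction to hnf ($k$ steps), $\mathrm{BT}^c(M)$ is the tree $\lambda x_1\ldots x_n.\,y\,\mathrm{BT}^c(M_1)\ldots\mathrm{BT}^c(M_m)$ whose root node is annotated with $k$. Positions are sequences over $\{0,1,2\}$ in applicative notation: $0$ enters an abstraction body, $1$ the function part and $2$ the argument of an application (so in a tree $f\,S\,T=(fS)T$, $S$ is at position $12$ and $T$ at position $2$); $(12)^n2$ denotes $n$ repetitions of $12$ followed by $2$. *)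

(* Defs.v *)
(* Untyped lambda calculus with de Bruijn indices (= terms modulo alpha). *)
From Stdlib Require Import Arith List Relations.
Import ListNotations.

Inductive term : Type :=
| Var : nat -> term
| App : term -> term -> term
| Lam : term -> term.

Fixpoint lift (d c : nat) (t : term) : term :=
  match t with
  | Var n => if n <? c then Var n else Var (n + d)
  | App a b => App (lift d c a) (lift d c b)
  | Lam b => Lam (lift d (S c) b)
  end.

Fixpoint subst_at (j : nat) (s : term) (t : term) : term :=
  match t with
  | Var n => if n =? j then lift j 0 s
             else if j <? n then Var (n - 1) else Var n
  | App a b => App (subst_at j s a) (subst_at j s b)
  | Lam b => Lam (subst_at (S j) s b)
  end.

(* P[y := Q] for the body P of \y.P *)
Definition subst0 (P Q : term) : term := subst_at 0 Q P.

Fixpoint free_in (n : nat) (t : term) : Prop :=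
  match t with
  | Var m => m = n
  | App a b => free_in n a \/ free_in n b
  | Lam b => free_in (S n) b
  end.

Inductive beta : term -> term -> Prop :=
| beta_redex : forall P Q, beta (App (Lam P) Q) (subst0 P Q)
| beta_appl : forall M M' N, beta M M' -> beta (App M N) (App M' N)
| beta_appr : forall M N N', beta N N' -> beta (App M N) (App M N')
| beta_lam : forall M M', beta M M' -> beta (Lam M) (Lam M').

Definition beta_conv : relation term := clos_refl_sym_trans term beta.

Definition fpc (Y : term) : Prop :=
  exists z, ~ free_in z Y /\ beta_conv (App Y (Var z)) (App (Var z) (App Y (Var z))).

(* head reduction step:  \x1..xn.(\y.P) Q Q1..Qm -> \x1..xn. P[y:=Q] Q1..Qm *)
Definition is_lam (t : term) : Prop := match t with Lam _ => True | _ => False end.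

Inductive hstep : term -> term -> Prop :=
| hstep_redex : forall P Q, hstep (App (Lam P) Q) (subst0 P Q)
| hstep_app : forall M M' N, ~ is_lam M -> hstep M M' -> hstep (App M N) (App M' N)
| hstep_lam : forall M M', hstep M M' -> hstep (Lam M) (Lam M').

Inductive hsteps : nat -> term -> term -> Prop :=
| hsteps_0 : forall M, hsteps 0 M M
| hsteps_S : forall k M N P, hstep M N -> hsteps k N P -> hsteps (S k) M P.

(* head normal forms  \x1..xn. y Q1..Qm *)
Inductive hnf_body : term -> Prop :=
| hb_var : forall y, hnf_body (Var y)
| hb_app : forall B N, hnf_body B -> hnf_body (App B N).

Inductive hnf : term -> Prop :=
| hnf_body_ : forall B, hnf_body B -> hnf B
| hnf_lam : forall B, hnf B -> hnf (Lam B).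

(* positions: 0 = abstraction body, 1 = function part, 2 = argument *)
Inductive dir : Type := D0 | D1 | D2.
Definition position := list dir.

(* arg_at H p N : in the hnf H = \x1..xn. y M1..Mm, N = Mi sits at position p
   (p = 0^n 1^(m-i) 2) *)
Inductive arg_at : term -> position -> term -> Prop :=
| arg_lam : forall B p N, arg_at B p N -> arg_at (Lam B) (D0 :: p) N
| arg_here : forall B N, arg_at (App B N) [D2] N
| arg_fun : forall B N p N', arg_at B p N' -> arg_at (App B N) (D1 :: p) N'.

(* annot M p k : in the clocked Boehm tree BT^c(M), the subtree at position p
   is a node carrying annotation k *)
Inductive annot : term -> position -> nat -> Prop :=
| annot_root : forall M H k, hsteps k M H -> hnf H -> annot M [] k
| annot_sub : forall M H j p N q k,
    hsteps j M H -> hnf H -> arg_at H p N -> annot N q k -> annot M (p ++ q) k.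

Fixpoint pos12 (n : nat) : position :=
  match n with
  | 0 => [D2]
  | S n => D1 :: D2 :: pos12 n
  end.

(* B'_Y = Y (\x. f x (f x (Y (\y. f x y)))), f the free variable with index f *)
Definition Bprime (Y : term) (f : nat) : term :=
  App Y (Lam (App (App (Var (S f)) (Var 0))
                  (App (App (Var (S f)) (Var 0))
                       (App (lift 1 0 Y)
                            (Lam (App (App (Var (S (S f))) (Var 1)) (Var 0))))))).

(* Main.v *)
Require Import Defs.
From Stdlib Require Import Arith List Relations Lia.
Import ListNotations.

Definition upr (xi : nat -> nat) (n : nat) : nat :=
  match n with 0 => 0 | S m => S (xi m) end.
Fixpoint ren (xi : nat -> nat) (t : term) : term :=
  match t with
  | Var n => Var (xi n)
  | App a b => App (ren xi a) (ren xi b)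
  | Lam b => Lam (ren (upr xi) b)
  end.
Definition up (s : nat -> term) (n : nat) : term :=
  match n with 0 => Var 0 | S m => ren S (s m) end.
Fixpoint subst (s : nat -> term) (t : term) : term :=
  match t with
  | Var n => s n
  | App a b => App (subst s a) (subst s b)
  | Lam b => Lam (subst (up s) b)
  end.

Lemma ren_ext : forall t xi zeta, (forall n, xi n = zeta n) -> ren xi t = ren zeta t.
Proof.
  induction t; intros xi zeta H; simpl; f_equal; auto.
  apply IHt. intros [|n]; simpl; auto.
Qed.

Lemma subst_ext : forall t s r, (forall n, s n = r n) -> subst s t = subst r t.
Proof.
  induction t; intros s r H; simpl; f_equal; auto.
  apply IHt. intros [|n]; simpl; auto. rewrite H; auto.
Qed.

Lemma ren_ren : forall t xi zeta, ren xi (ren zeta t) = ren (fun n => xi (zeta n)) t.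
Proof.
  induction t; intros xi zeta; simpl; f_equal; auto.
  rewrite IHt. apply ren_ext. intros [|n]; reflexivity.
Qed.

Lemma subst_ren : forall t s xi, subst s (ren xi t) = subst (fun n => s (xi n)) t.
Proof.
  induction t; intros s xi; simpl; f_equal; auto.
  rewrite IHt. apply subst_ext. intros [|n]; reflexivity.
Qed.

Lemma ren_subst : forall t xi s, ren xi (subst s t) = subst (fun n => ren xi (s n)) t.
Proof.
  induction t; intros xi s; simpl; f_equal; auto.
  rewrite IHt. apply subst_ext. intros [|n]; simpl; auto.
  rewrite !ren_ren. apply ren_ext. intros; reflexivity.
Qed.

Lemma subst_subst : forall t s r, subst s (subst r t) = subst (fun n => subst s (r n)) t.
Proof.
  induction t; intros s r; simpl; f_equal; auto.
  rewrite IHt. apply subst_ext. intros [|n]; simpl; auto.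
  rewrite subst_ren, ren_subst. apply subst_ext. intros; reflexivity.
Qed.

Lemma ren_id : forall t, ren (fun n => n) t = t.
Proof.
  induction t; simpl; f_equal; auto.
  rewrite <- IHt at 2. apply ren_ext. intros [|n]; reflexivity.
Qed.

Lemma subst_var : forall t, subst Var t = t.
Proof.
  induction t; simpl; f_equal; auto.
  rewrite <- IHt at 2. apply subst_ext. intros [|n]; reflexivity.
Qed.

Definition liftf (d c n : nat) : nat := if n <? c then n else n + d.

Lemma lift_ren : forall t d c, lift d c t = ren (liftf d c) t.
Proof.
  induction t; intros d c; simpl; auto.
  - unfold liftf. destruct (n <? c); auto.
  - f_equal; auto.
  - f_equal. rewrite IHt. apply ren_ext. intros [|n]; unfold liftf; simpl; auto.
    change (S n <? S c) with (n <? c). destruct (n <? c); auto.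
Qed.

Definition sf (j : nat) (s : term) (n : nat) : term :=
  if n =? j then lift j 0 s else if j <? n then Var (n - 1) else Var n.

Lemma subst_at_subst : forall t j s, subst_at j s t = subst (sf j s) t.
Proof.
  induction t; intros j s; simpl; auto.
  - f_equal; auto.
  - f_equal. rewrite IHt. apply subst_ext. intros [|n]; unfold sf; simpl; auto.
    destruct (n =? j) eqn:E.
    + rewrite !lift_ren, ren_ren. apply ren_ext. intros m; unfold liftf; simpl. lia.
    + change (S j <? S n) with (j <? n). destruct (j <? n) eqn:E2; simpl; auto.
      apply Nat.ltb_lt in E2. f_equal. lia.
Qed.

Definition beta0 (Q : term) (n : nat) : term :=
  match n with 0 => Q | S m => Var m end.

Lemma subst0_beta0 : forall P Q, subst0 P Q = subst (beta0 Q) P.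
Proof.
  intros. unfold subst0. rewrite subst_at_subst. apply subst_ext.
  intros [|n]; unfold sf; simpl.
  - rewrite lift_ren. rewrite <- (ren_id Q) at 2. apply ren_ext. intros m; unfold liftf; simpl. lia.
  - f_equal; lia.
Qed.

Lemma ren_subst0 : forall P Q xi, ren xi (subst0 P Q) = subst0 (ren (upr xi) P) (ren xi Q).
Proof.
  intros. rewrite !subst0_beta0, ren_subst, subst_ren. apply subst_ext.
  intros [|n]; reflexivity.
Qed.

Lemma subst_subst0 : forall P Q s, subst s (subst0 P Q) = subst0 (subst (up s) P) (subst s Q).
Proof.
  intros. rewrite !subst0_beta0, !subst_subst. apply subst_ext.
  intros [|n]; simpl; auto.
  rewrite subst_ren. rewrite <- (subst_var (s n)) at 1. apply subst_ext. intros; reflexivity.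
Qed.

Inductive par : term -> term -> Prop :=
| par_var : forall n, par (Var n) (Var n)
| par_app : forall M M' N N', par M M' -> par N N' -> par (App M N) (App M' N')
| par_lam : forall M M', par M M' -> par (Lam M) (Lam M')
| par_beta : forall P P' Q Q', par P P' -> par Q Q' -> par (App (Lam P) Q) (subst0 P' Q').

Lemma par_refl : forall t, par t t.
Proof. induction t; constructor; auto. Qed.

Lemma par_ren : forall M M', par M M' -> forall xi, par (ren xi M) (ren xi M').
Proof.
  induction 1; intros xi; simpl; try constructor; auto.
  rewrite ren_subst0. constructor; auto.
Qed.

Lemma par_subst : forall M M', par M M' -> forall s r, (forall n, par (s n) (r n)) ->
  par (subst s M) (subst r M').
Proof.
  assert (Hup : forall s r, (forall n, par (s n) (r n)) -> forall n, par (up s n) (up r n)).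
  { intros s r H [|n]; simpl. constructor. apply par_ren; auto. }
  induction 1; intros s r Hs; simpl; auto.
  - constructor; auto.
  - constructor; auto.
  - rewrite subst_subst0. constructor; auto.
Qed.

Lemma par_subst0 : forall P P' Q Q', par P P' -> par Q Q' -> par (subst0 P Q) (subst0 P' Q').
Proof.
  intros. rewrite !subst0_beta0. apply par_subst; auto.
  intros [|n]; simpl; auto; constructor.
Qed.

Fixpoint rho (t : term) : term :=
  match t with
  | Var n => Var n
  | Lam b => Lam (rho b)
  | App a b => match a with
               | Lam P => subst0 (rho P) (rho b)
               | _ => App (rho a) (rho b)
               end
  end.

Lemma par_rho : forall M M', par M M' -> par M' (rho M).
Proof.
  induction 1; simpl.
  - constructor.
  - destruct M; simpl in *.
    + constructor; auto.
    + constructor; auto.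
    + inversion H; subst. inversion IHpar1; subst. constructor; auto.
  - constructor; auto.
  - apply par_subst0; auto.
Qed.

Definition red := clos_refl_trans term beta.

Lemma red_app : forall M M' N N', red M M' -> red N N' -> red (App M N) (App M' N').
Proof.
  intros M M' N N' H1 H2. apply rt_trans with (App M' N).
  - induction H1. apply rt_step; constructor; auto. apply rt_refl. eapply rt_trans; eauto.
  - induction H2. apply rt_step; constructor; auto. apply rt_refl. eapply rt_trans; eauto.
Qed.

Lemma red_lam : forall M M', red M M' -> red (Lam M) (Lam M').
Proof.
  induction 1. apply rt_step; constructor; auto. apply rt_refl. eapply rt_trans; eauto.
Qed.

Lemma par_red : forall M M', par M M' -> red M M'.
Proof.
  induction 1.
  - apply rt_refl.
  - apply red_app; auto.
  - apply red_lam; auto.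
  - eapply rt_trans. apply red_app. apply red_lam. eauto. eauto.
    apply rt_step. constructor.
Qed.

Lemma beta_par : forall M M', beta M M' -> par M M'.
Proof.
  induction 1; constructor; auto using par_refl.
Qed.

Lemma strip : forall M N2, clos_refl_trans_1n term par M N2 -> forall N1, par M N1 ->
  exists X, clos_refl_trans_1n term par N1 X /\ par N2 X.
Proof.
  induction 1; intros N1 H1.
  - exists N1. split. constructor. auto.
  - assert (par y (rho x)) by (apply par_rho; auto).
    assert (par N1 (rho x)) by (apply par_rho; auto).
    destruct (IHclos_refl_trans_1n _ H2) as [X [HX1 HX2]].
    exists X. split; auto. econstructor; eauto.
Qed.

Lemma conf_par : forall M N1, clos_refl_trans_1n term par M N1 -> forall N2,
  clos_refl_trans_1n term par M N2 ->
  exists X, clos_refl_trans_1n term par N1 X /\ clos_refl_trans_1n term par N2 X.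
Proof.
  induction 1; intros N2 H2.
  - exists N2. split; auto. constructor.
  - destruct (strip _ _ H2 _ H) as [X [HX1 HX2]].
    destruct (IHclos_refl_trans_1n _ HX1) as [Z [HZ1 HZ2]].
    exists Z. split; auto. econstructor; eauto.
Qed.

Lemma red_parstar : forall M N, red M N -> clos_refl_trans_1n term par M N.
Proof.
  intros M N H. apply clos_rt_rt1n_iff in H. induction H.
  constructor. econstructor; eauto. apply beta_par; auto.
Qed.

Lemma parstar_red : forall M N, clos_refl_trans_1n term par M N -> red M N.
Proof.
  induction 1. apply rt_refl. eapply rt_trans; eauto. apply par_red; auto.
Qed.

Lemma conf : forall M N1 N2, red M N1 -> red M N2 -> exists X, red N1 X /\ red N2 X.
Proof.
  intros. destruct (conf_par _ _ (red_parstar _ _ H) _ (red_parstar _ _ H0)) as [X [? ?]].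
  exists X; split; apply parstar_red; auto.
Qed.

Lemma cr : forall M N, beta_conv M N -> exists X, red M X /\ red N X.
Proof.
  induction 1.
  - exists y. split. apply rt_step; auto. apply rt_refl.
  - exists x. split; apply rt_refl.
  - destruct IHclos_refl_sym_trans as [X [? ?]]. exists X; auto.
  - destruct IHclos_refl_sym_trans1 as [X [? ?]].
    destruct IHclos_refl_sym_trans2 as [Z [? ?]].
    destruct (conf y X Z) as [W [? ?]]; auto.
    exists W. split; eapply rt_trans; eauto.
Qed.

Lemma hnf_body_nolam : forall B, hnf_body B -> ~ is_lam B.
Proof. intros B H; inversion H; simpl; auto. Qed.

Lemma hnf_body_nostep : forall B, hnf_body B -> forall X, ~ hstep B X.
Proof.
  induction 1; intros X HX; inversion HX; subst.
  - inversion H.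
  - eapply IHhnf_body; eauto.
Qed.

Lemma hnf_nostep : forall H, hnf H -> forall X, ~ hstep H X.
Proof.
  induction 1; intros X HX.
  - eapply hnf_body_nostep; eauto.
  - inversion HX; subst. eapply IHhnf; eauto.
Qed.

Lemma hstep_det : forall M N1, hstep M N1 -> forall N2, hstep M N2 -> N1 = N2.
Proof.
  induction 1; intros N2 H2; inversion H2; subst; auto.
  all: try solve [exfalso; match goal with H : ~ is_lam _ |- _ => apply H; simpl; auto end].
  all: f_equal; auto.
Qed.

Lemma hsteps_det : forall k M H, hsteps k M H -> hnf H -> forall k' H', hsteps k' M H' -> hnf H' ->
  k = k' /\ H = H'.
Proof.
  induction 1 as [M|k M N P Hst Hss IH]; intros Hh k' H' Hs Hh'.
  - destruct Hs as [|k0 M0 N0 P0 Hst0 Hss0]; auto. exfalso; exact (hnf_nostep _ Hh _ Hst0).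
  - destruct Hs as [|k0 M0 N0 P0 Hst0 Hss0].
    + exfalso; exact (hnf_nostep _ Hh' _ Hst).
    + assert (N = N0) by (eapply hstep_det; eauto). subst.
      destruct (IH Hh _ _ Hss0 Hh'). subst; auto.
Qed.

Lemma progress : forall t, hnf t \/ exists t', hstep t t'.
Proof.
  induction t.
  - left; constructor; constructor.
  - destruct t1.
    + left; constructor; constructor; constructor.
    + destruct IHt1 as [H|[t' H]].
      * left. inversion H; subst. constructor. constructor. auto.
      * right. exists (App t' t2). constructor; simpl; auto.
    + right. eexists. constructor.
  - destruct IHt as [H|[t' H]].
    + left; apply hnf_lam; auto.
    + right; eexists; constructor; eauto.
Qed.

Lemma hstep_subst : forall M M', hstep M M' -> forall s, hstep (subst s M) (subst s M').
Proof.
  induction 1; intros s; simpl.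
  - rewrite subst_subst0. constructor.
  - constructor; auto. destruct M; simpl in *; auto. inversion H0.
  - constructor; auto.
Qed.

Lemma hstep_beta : forall M M', hstep M M' -> beta M M'.
Proof. induction 1; constructor; auto. Qed.

Lemma hsteps_red : forall k M M', hsteps k M M' -> red M M'.
Proof.
  induction 1. apply rt_refl. eapply rt_trans; eauto. apply rt_step, hstep_beta; auto.
Qed.

Lemma sim : forall s k N H, hsteps k (subst s N) H -> hnf H ->
  exists j Hn, j <= k /\ hsteps j N Hn /\ hnf Hn /\ hsteps (k - j) (subst s Hn) H.
Proof.
  intros s k. induction k; intros N H Hs Hh.
  - destruct (progress N) as [Hn|[N' Hn]].
    + exists 0, N. rewrite Nat.sub_0_r. repeat split; auto. constructor.
    + inversion Hs; subst. exfalso. eapply hnf_nostep; eauto. apply hstep_subst; eauto.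
  - destruct (progress N) as [Hn|[N' Hn]].
    + exists 0, N. rewrite Nat.sub_0_r. repeat split; auto. lia. constructor.
    + inversion Hs; subst.
      assert (N0 = subst s N') by (eapply hstep_det; eauto; apply hstep_subst; auto). subst.
      destruct (IHk _ _ H2 Hh) as [j [Hn' [? [? [? ?]]]]].
      exists (S j), Hn'. repeat split; auto. lia. econstructor; eauto.
Qed.

Fixpoint hd (t : term) : nat := match t with Var y => y | App a _ => hd a | Lam _ => 0 end.
Fixpoint nargs (t : term) : nat := match t with App a _ => S (nargs a) | _ => 0 end.

Lemma hnf_body_beta : forall B, hnf_body B -> forall X, beta B X ->
  hnf_body X /\ hd X = hd B /\ nargs X = nargs B.
Proof.
  induction 1; intros X HX; inversion HX; subst.
  - inversion H.
  - destruct (IHhnf_body _ H3) as [? [? ?]]. simpl. repeat split; auto. constructor; auto.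
  - simpl. repeat split; auto. constructor; auto.
Qed.

Lemma hnf_body_red : forall B X, red B X -> hnf_body B -> 
  hnf_body X /\ hd X = hd B /\ nargs X = nargs B.
Proof.
  intros B X H. apply clos_rt_rt1n_iff in H. induction H; intros Hb.
  - auto.
  - destruct (hnf_body_beta _ Hb _ H) as [? [? ?]].
    destruct (IHclos_refl_trans_1n H1) as [? [? ?]]. repeat split; congruence.
Qed.

Lemma lam_red : forall M X, red (Lam M) X -> exists M', X = Lam M'.
Proof.
  intros M X H. apply clos_rt_rt1n_iff in H. remember (Lam M) as T. revert M HeqT. induction H; intros M0 E; subst.
  - eauto.
  - inversion H; subst. eapply IHclos_refl_trans_1n; eauto.
Qed.

Lemma varapp_red : forall y N X, red (App (Var y) N) X -> exists N', X = App (Var y) N' /\ red N N'.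
Proof.
  intros y N X H. apply clos_rt_rt1n_iff in H. remember (App (Var y) N) as T. revert N HeqT.
  induction H; intros N0 E; subst.
  - exists N0; split; auto. apply rt_refl.
  - inversion H; subst.
    + inversion H4.
    + destruct (IHclos_refl_trans_1n N' eq_refl) as [N'' [? ?]].
      exists N''; split; auto. eapply rt_trans; eauto. apply rt_step; auto.
Qed.

Lemma conv_sym : forall a b, beta_conv a b -> beta_conv b a.
Proof. intros; apply rst_sym; auto. Qed.
Lemma conv_trans : forall a b c, beta_conv a b -> beta_conv b c -> beta_conv a c.
Proof. intros; eapply rst_trans; eauto. Qed.
Lemma red_conv : forall a b, red a b -> beta_conv a b.
Proof. induction 1. apply rst_step; auto. apply rst_refl. eapply rst_trans; eauto. Qed.

Lemma hnf_shape : forall Hn z P, hnf Hn -> beta_conv Hn (App (Var z) P) ->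
  exists N1, Hn = App (Var z) N1 /\ beta_conv N1 P.
Proof.
  intros Hn z P Hh Hc. destruct (cr _ _ Hc) as [X [H1 H2]].
  destruct (varapp_red _ _ _ H2) as [P' [E HP]]. subst X.
  inversion Hh; subst.
  - destruct (hnf_body_red _ _ H1 H) as [_ [Hd Hna]]. simpl in Hd, Hna.
    inversion H; subst; simpl in Hna; try discriminate.
    inversion H0; subst; simpl in Hna; try discriminate. simpl in *.
    exists N. split; auto.
    destruct (varapp_red _ _ _ H1) as [N' [E HN]]. inversion E; subst.
    eapply conv_trans. apply red_conv; eauto. apply conv_sym, red_conv; auto.
  - destruct (lam_red _ _ H1) as [? E]. discriminate.
Qed.

Lemma subst_closed : forall t s, (forall n, free_in n t -> s n = Var n) -> subst s t = t.
Proof.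
  induction t; intros s H; simpl in *.
  - apply H; auto.
  - f_equal; auto.
  - f_equal. apply IHt. intros [|n] Hn; simpl; auto.
    rewrite H; auto.
Qed.

Definition Fb (Y : term) (f : nat) : term :=
  App (App (Var (S f)) (Var 0))
      (App (App (Var (S f)) (Var 0))
           (App (lift 1 0 Y)
                (Lam (App (App (Var (S (S f))) (Var 1)) (Var 0))))).

Definition sig (Y : term) (f z : nat) (n : nat) : term :=
  if n =? z then Lam (Fb Y f) else Var n.

Lemma base : forall Y f z, ~ free_in z Y -> subst (sig Y f z) (App Y (Var z)) = Bprime Y f.
Proof.
  intros. simpl. rewrite subst_closed.
  - unfold sig. rewrite Nat.eqb_refl. reflexivity.
  - intros n Hn. unfold sig. destruct (n =? z) eqn:E; auto.
    apply Nat.eqb_eq in E. subst. contradiction.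
Qed.

Lemma Fb_subst0 : forall Y f N, exists R,
  subst0 (Fb Y f) N = App (App (Var f) N) (App (App (Var f) N) R).
Proof.
  intros. unfold subst0, Fb. simpl.
  replace (f - 0) with f by lia.
  assert (lift 0 0 N = N).
  { rewrite lift_ren. rewrite <- (ren_id N) at 2. apply ren_ext. intros; unfold liftf; simpl; lia. }
  rewrite H. eauto.
Qed.

Lemma hnf_not_redex : forall P Q, ~ hnf (App (Lam P) Q).
Proof.
  intros P Q H. inversion H; subst. inversion H0; subst. inversion H2.
Qed.

Lemma key : forall Y f z, beta_conv (App Y (Var z)) (App (Var z) (App Y (Var z))) ->
  forall N k H, beta_conv N (App Y (Var z)) -> hsteps k (subst (sig Y f z) N) H -> hnf H ->
  exists N1 R, beta_conv N1 (App Y (Var z)) /\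
    H = App (App (Var f) (subst (sig Y f z) N1)) (App (App (Var f) (subst (sig Y f z) N1)) R).
Proof.
  intros Y f z Hfix N k H HN Hs Hh.
  destruct (sim _ _ _ _ Hs Hh) as [j [Hn [_ [Hs1 [Hhn Hs2]]]]].
  assert (Hc : beta_conv Hn (App (Var z) (App Y (Var z)))).
  { eapply conv_trans. apply conv_sym, red_conv. eapply hsteps_red; eauto.
    eapply conv_trans; eauto. }
  destruct (hnf_shape _ _ _ Hhn Hc) as [N1 [E HN1]]. subst Hn.
  exists N1.
  simpl in Hs2. unfold sig at 1 in Hs2. rewrite Nat.eqb_refl in Hs2.
  fold (sig Y f z) in Hs2.
  destruct (Fb_subst0 Y f (subst (sig Y f z) N1)) as [R HR].
  exists R. split; auto.
  inversion Hs2; subst.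
  - exfalso. eapply hnf_not_redex; eauto.
  - assert (N0 = subst0 (Fb Y f) (subst (sig Y f z) N1)).
    { eapply hstep_det; eauto. constructor. }
    subst. rewrite HR in H2.
    assert (Hh0 : hnf (App (App (Var f) (subst (sig Y f z) N1))
                 (App (App (Var f) (subst (sig Y f z) N1)) R))).
    { constructor. constructor. constructor. constructor. }
    destruct (hsteps_det _ _ _ H2 Hh 0 _ (hsteps_0 _) Hh0). auto.
Qed.

Lemma arg_at_nonnil : forall H p N, arg_at H p N -> p <> [].
Proof. intros H p N Ha; destruct Ha; discriminate. Qed.

Lemma annot_nil_hnf : forall A k, annot A [] k -> hnf A -> k = 0.
Proof.
  intros A k Ha Hh. inversion Ha; subst.
  - match goal with Hs : hsteps _ _ _ |- _ => destruct Hs as [|k0 M0 N0 P0 Hst0 Hss0]; auto; exfalso; exact (hnf_nostep _ Hh _ Hst0) end.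
  - destruct p; [exfalso; eapply arg_at_nonnil; eauto | discriminate].
Qed.

Lemma main : forall Y f z, beta_conv (App Y (Var z)) (App (Var z) (App Y (Var z))) ->
  forall n N k, beta_conv N (App Y (Var z)) -> annot (subst (sig Y f z) N) (pos12 n) k -> k = 0.
Proof.
  intros Y f z Hfix n. induction n; intros N k HN Ha;
  inversion Ha as [|M0 Hd j p N0 q k0 Hs Hh Harg Hann Eq]; subst;
    destruct (key Y f z Hfix N _ _ HN Hs Hh) as [N1 [R [HN1 E]]]; subst Hd;
    inversion Harg as [| B1 A1 | B1 A1 p1 A2 Harg1]; subst.
  - match goal with Hq : _ ++ _ = _ |- _ => simpl in Hq; inversion Hq; subst end. eapply annot_nil_hnf; eauto.
    constructor. constructor. constructor. constructor.
  - inversion Harg1; subst.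
    + match goal with Hq : _ ++ _ = _ |- _ => simpl in Hq; inversion Hq end.
    + match goal with Hx : arg_at (Var _) _ _ |- _ => inversion Hx end.
  - match goal with Hq : _ ++ _ = _ |- _ => simpl in Hq; inversion Hq end.
  - inversion Harg1; subst.
    + match goal with Hq : _ ++ _ = _ |- _ => simpl in Hq; inversion Hq; subst end. eapply IHn; eauto.
    + match goal with Hx : arg_at (Var _) _ _ |- _ => inversion Hx end.
Qed.

Theorem lemma5p2 : forall (Y : term) (f n k : nat),
  fpc Y -> annot (Bprime Y f) (pos12 n) k -> k = 0.
Proof.
  intros Y f n k [z [Hz Hfix]] Ha.
  rewrite <- (base Y f z Hz) in Ha.
  eapply main; eauto. apply rst_refl.
Qed.
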